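(* Let $G$ be a finite group and $M$ a finitely generated (hence finite) $\mathbb{B}[G]$-module. Then $M$ is isomorphic (as a $\mathbb{B}[G]$-module) to a submodule of $\mathbb{B}[G]^n$ for some $n$.
   Context: $\mathbb{B}=\{0,1\}$ is the Boolean semifield with $1+1=1$ and $\mathbb{B}[G]$ is the group semiring. *)

(* Defs.v *)
From HB Require Import structures.
From mathcomp Require Import all_boot all_order all_algebra all_fingroup.
Set Implicit Arguments. Unset Strict Implicit. Unset Printing Implicit Defensive.
Import GRing.Theory.

(* An element sum_g a_g g of B[G] (a_g in B) is
   identified with its support {g | a_g = 1}, a subset of G.  Addition is
   union (coefficientwise Boolean sum), zero is the empty set, the product is
   the convolution product, i.e. the pointwise product of subsets
   A * B = {a b | a in A, b in B}, and the unit is [set 1]. *)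
Definition BG (gT : finGroupType) : Type := {set gT}.

Section BGStructure.
Variable gT : finGroupType.

HB.instance Definition _ := Choice.on (BG gT).

Definition BG_add (A B : BG gT) : BG gT := A :|: B.
Definition BG_zero : BG gT := set0.
Definition BG_mul (A B : BG gT) : BG gT := set_mulg A B.
Definition BG_one : BG gT := [set 1%g].

Fact BG_addA : associative BG_add. Proof. exact: setUA. Qed.
Fact BG_addC : commutative BG_add. Proof. exact: setUC. Qed.
Fact BG_add0 : left_id BG_zero BG_add. Proof. exact: set0U. Qed.

HB.instance Definition _ := GRing.isNmodule.Build (BG gT) BG_addA BG_addC BG_add0.

Fact BG_mulA : associative BG_mul. Proof. exact: set_mulgA. Qed.
Fact BG_mul1 : left_id BG_one BG_mul. Proof. exact: set_mul1g. Qed.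
Fact BG_mulr1 : right_id BG_one BG_mul. Proof. exact: (@mulg1 {set gT}). Qed.
Fact BG_mulDl : left_distributive BG_mul BG_add. Proof. exact: mulUg. Qed.
Fact BG_mulDr : right_distributive BG_mul BG_add. Proof. exact: mulgU. Qed.
Fact BG_mul0 : left_zero BG_zero BG_mul.
Proof.
move=> A; apply/eqP; rewrite eqEsubset sub0set andbT.
by apply/subsetP => x /mulsgP [y z]; rewrite inE.
Qed.
Fact BG_mulr0 : right_zero BG_zero BG_mul.
Proof.
move=> A; apply/eqP; rewrite eqEsubset sub0set andbT.
by apply/subsetP => x /mulsgP [y z _]; rewrite inE.
Qed.
Fact BG_one_neq0 : BG_one != BG_zero.
Proof. by apply/set0Pn; exists 1%g; rewrite inE. Qed.

HB.instance Definition _ := GRing.Nmodule_isNzSemiRing.Build (BG gT)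
  BG_mulA BG_mul1 BG_mulr1 BG_mulDl BG_mulDr BG_mul0 BG_mulr0 BG_one_neq0.

End BGStructure.

Definition finitely_generated (gT : finGroupType) (M : lSemiModType (BG gT)) :=
  exists s : seq M, forall m : M,
    exists c : 'I_(size s) -> BG gT, m = (\sum_(i < size s) c i *: s`_i)%R.

Definition BGfree (gT : finGroupType) (n : nat) := {ffun 'I_n -> (BG gT)^o}.

(* Main.v *)
Require Import Defs.
From HB Require Import structures.
From mathcomp Require Import all_boot all_order all_algebra all_fingroup.

Set Implicit Arguments. Unset Strict Implicit. Unset Printing Implicit Defensive.
Import GRing.Theory.

Section Emb.
Variable gT : finGroupType.
Variable M : lSemiModType (BG gT).
Local Open Scope ring_scope.

Definition le (a b : M) : bool := a + b == b.

Lemma addmm (m : M) : m + m = m.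
Proof.
have -> : m + m = (1 + 1 : BG gT) *: m by rewrite scalerDl scale1r.
have -> : (1 + 1 : BG gT) = 1 by apply: setUid.
by rewrite scale1r.
Qed.

Lemma le0 x : le 0 x.
Proof. by rewrite /le add0r. Qed.

Lemma leD a b x : le (a + b) x = le a x && le b x.
Proof.
rewrite /le; apply/eqP/andP.
  move=> H; split; apply/eqP.
    rewrite -{1}H (addrA a (a + b) x) (addrA a a b) addmm. exact H.
  by rewrite -{1}H (addrA b (a + b) x) (addrC a b) (addrA b b a) addmm (addrC b a).
by case=> /eqP Ha /eqP Hb; rewrite -addrA Hb Ha.
Qed.

Lemma le_sum (I : finType) (P : pred I) (F : I -> M) x :
  le (\sum_(i | P i) F i) x = [forall (i | P i), le (F i) x].
Proof.
rewrite (big_morph (fun a => le a x) (fun a b => leD a b x) (le0 x)).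
apply/idP/forallP.
  move=> H i; apply/implyP=> Pi; move: H.
  by rewrite (bigD1 i) //= => /andP[].
move=> H; apply: (big_ind (fun b : bool => b)) => //.
  by move=> u v -> ->.
by move=> i Pi; exact: (implyP (H i)).
Qed.

Lemma BG_decomp (A : BG gT) : A = \sum_(a in A) ([set a] : BG gT).
Proof.
apply/setP=> g.
have -> : (\sum_(a in A) ([set a] : BG gT)) = \bigcup_(a in A) [set a] by [].
apply/idP/bigcupP.
  by move=> gA; exists g => //; rewrite inE.
by case=> a aA; rewrite inE => /eqP ->.
Qed.

Lemma BG_mul11 (x y : gT) : (([set x] : BG gT) * ([set y] : BG gT)) = ([set (x * y)%g] : BG gT).
Proof.
apply/setP=> g; apply/idP/idP.
  by case/mulsgP=> u v; rewrite !inE => /eqP -> /eqP -> ->.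
rewrite inE => /eqP ->; apply/mulsgP; exists x y => //; by rewrite inE.
Qed.

Definition fx (x m : M) : BG gT := [set g : gT | ~~ le (([set g^-1]%g : BG gT) *: m) x].

Lemma fxD x : {morph fx x : a b / a + b}.
Proof.
move=> a b; apply/setP=> g.
by rewrite /fx /= !inE scalerDr leD negb_and.
Qed.

Lemma fxZ x (A : BG gT) m : fx x (A *: m) = A * fx x m.
Proof.
apply/setP=> g; rewrite /fx inE {1}(BG_decomp A) scaler_suml scaler_sumr.
under eq_bigr do rewrite scalerA BG_mul11.
rewrite le_sum negb_forall; apply/existsP/idP.
  case=> a; rewrite negb_imply => /andP[aA H].
  apply/mulsgP; exists a (a^-1 * g)%g => //; last by rewrite mulKVg.
  by rewrite inE invMg invgK.
case/mulsgP=> a b aA; rewrite inE => H ->.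
by exists a; rewrite negb_imply aA /=; move: H; rewrite invMg -mulgA mulVg mulg1.
Qed.

Variable I : finType.
Variable gen : I -> M.
Hypothesis gen_surj : forall m, exists i, m = gen i.

Definition Femb (m : M) : BGfree gT #|I| := [ffun j => fx (gen (enum_val j)) m].

Lemma Femb_semilinear : semilinear_for *:%R Femb.
Proof.
split.
  move=> A m; apply/ffunP=> j; rewrite /Femb /= !ffunE fxZ //.
move=> a b; apply/ffunP=> j; rewrite /Femb /= !ffunE fxD //.
Qed.

HB.instance Definition _ := GRing.isSemilinear.Build (BG gT) M (BGfree gT #|I|) *:%R Femb Femb_semilinear.

Lemma fx_self x m : (1%g \in fx x m) = ~~ le m x.
Proof. by rewrite /fx inE invg1 (_ : ([set 1%g] : BG gT) = 1) // scale1r. Qed.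

Lemma Femb_inj : injective Femb.
Proof.
have key : forall m m', Femb m = Femb m' -> le m m'.
  move=> m m' E; have [i Hi] := gen_surj m'.
  have := congr1 (fun f : BGfree gT #|I| => 1%g \in f (enum_rank i)) E.
  rewrite /Femb /= !ffunE enum_rankK !fx_self.
  rewrite -Hi /le addmm eqxx /=. by move/negbFE.
move=> m m' E; have /eqP h1 := key _ _ E; have /eqP h2 := key _ _ (esym E).
by rewrite -h2 addrC h1.
Qed.

End Emb.

Theorem corollary4p9 (gT : finGroupType) (M : lSemiModType (BG gT)) :
  finitely_generated M ->
  exists (n : nat) (f : {linear M -> BGfree gT n}), injective f.
Proof.
case=> s Hs.
pose gen (c : {ffun 'I_(size s) -> BG gT}) : M := (\sum_(i < size s) c i *: s`_i)%R.
have gs : forall m, exists c, m = gen c.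
  move=> m; have [c ->] := Hs m; exists [ffun i => c i].
  by rewrite /gen; apply: eq_bigr => i _; rewrite ffunE.
exists #|{ffun 'I_(size s) -> BG gT}|, (Femb gen).
exact: Femb_inj.
Qed.
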